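(* Let $\Bbbk$ be an algebraically closed field of characteristic zero, $G$ a finite group, $\chi:G\to\Bbbk^\times$ a linear character, $g\in Z(G)$, $n\geq 2$ the multiplicative order of $\chi(g)$, and $H$ the $\Bbbk$-algebra generated by $\Bbbk G$ and $z$ with relations $z^n=0$, $zs=\chi(s)sz$ ($s\in G$). Then for any nonzero $h_0,h_1,\dots,h_{n-1}\in\Bbbk G$, the ideals $(h_0),(zh_1),\dots,(z^{n-1}h_{n-1})$ are pairwise distinct.
   Context: $(a)$ denotes the two-sided ideal of $H$ generated by $a$. *)

(* Defs.v *)
From HB Require Import structures.
From mathcomp Require Import all_boot all_order all_algebra all_fingroup all_solvable.
Set Implicit Arguments. Unset Strict Implicit. Unset Printing Implicit Defensive.
Import GRing.Theory.
Local Open Scope ring_scope.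

(* The algebra H = k<kG, z | z^n = 0, z s = chi(s) s z> is realised on its
   standard basis { z^i s : i < n, s in G }: an element of H is the
   coefficient function 'I_n * G -> K, i.e. h = \sum_(i,s) h(i,s) z^i s. *)
Definition Halg (K : fieldType) (gT : finGroupType) (n : nat) :=
  {ffun 'I_n * gT -> K}.

(* Product: (z^i s)(z^j t) = chi(s)^{-j} z^(i+j) (s t), and 0 if i+j >= n
   (since s z = chi(s)^{-1} z s). *)
Definition Hmul (K : fieldType) (gT : finGroupType) (n : nat) (chi : gT -> K)
  (a b : Halg K gT n) : Halg K gT n :=
  [ffun p : 'I_n * gT =>
     \sum_(i : 'I_n) \sum_(j : 'I_n | (i + j)%N == val p.1)
       \sum_(s : gT) a (i, s) * b (j, (s^-1 * p.2)%g) * (chi s) ^- j].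

Definition zpow_kG (K : fieldType) (gT : finGroupType) (n : nat) (i : 'I_n)
  (h : {ffun gT -> K}) : Halg K gT n :=
  [ffun p : 'I_n * gT => if p.1 == i then h p.2 else 0].

Definition in_ideal (K : fieldType) (gT : finGroupType) (n : nat)
  (chi : gT -> K) (a x : Halg K gT n) : Prop :=
  exists (m : nat) (u v : 'I_m -> Halg K gT n),
    x = \sum_(k < m) Hmul chi (Hmul chi (u k) a) (v k).

Definition linear_char (K : fieldType) (gT : finGroupType) (chi : gT -> K) :=
  (forall s, chi s != 0) /\ (forall s t : gT, chi (s * t)%g = chi s * chi t).

(* Main.v *)
Require Import Defs.
From HB Require Import structures.
From mathcomp Require Import all_boot all_order all_algebra all_fingroup all_solvable.
Import GRing.Theory.
Local Open Scope ring_scope.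

Section S.
Variables (K : fieldType) (gT : finGroupType) (n : nat) (chi : gT -> K).

Definition lowvan (j : nat) (a : Halg K gT n) := forall p : 'I_n * gT, (p.1 < j)%N -> a p = 0.

Lemma lowvan_mull j u a : lowvan j a -> lowvan j (Hmul chi u a).
Proof.
move=> Ha [k t] /= kj; rewrite ffunE /=.
apply: big1 => i _; apply: big1 => l /eqP il; apply: big1 => s _.
rewrite (Ha (l, _)) ?mulr0 ?mul0r //=.
apply: leq_ltn_trans kj; rewrite -il; exact: leq_addl.
Qed.

Lemma lowvan_mulr j u a : lowvan j a -> lowvan j (Hmul chi a u).
Proof.
move=> Ha [k t] /= kj; rewrite ffunE /=.
apply: big1 => i _; apply: big1 => l /eqP il; apply: big1 => s _.
rewrite (Ha (i, _)) ?mulr0 ?mul0r //=.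
apply: leq_ltn_trans kj; rewrite -il; exact: leq_addr.
Qed.

Lemma lowvan_ideal j a x : lowvan j a -> in_ideal chi a x -> lowvan j x.
Proof.
move=> Ha [m [u [v ->]]] p pj; rewrite sum_ffunE.
apply: big1 => k _; have := @lowvan_mulr j (v k) _ (@lowvan_mull j (u k) _ Ha); move=> L; rewrite L //.
Qed.

Definition delta1 : {ffun gT -> K} := [ffun s => if s == 1%g then 1 else 0].

Lemma mul1H (i0 : 'I_n) a : val i0 = 0%N -> chi 1%g = 1 ->
  Hmul chi (zpow_kG i0 delta1) a = a.
Proof.
move=> i00 chi1; apply/ffunP => [[k t]]; rewrite ffunE /=.
rewrite (bigD1 i0) //= [X in _ + X]big1 ?addr0; last first.
  move=> i ii0; apply: big1 => l _; apply: big1 => s _.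
  by rewrite ffunE /= (negbTE ii0) !mul0r.
rewrite (bigD1 k) /=; last by rewrite i00.
rewrite [X in _ + X]big1 ?addr0; last first.
  move=> l /andP[/eqP H1 H2]; rewrite i00 /= in H1.
  by move/eqP: H2; case; apply/val_inj.
rewrite (bigD1 1%g) //= [X in _ + X]big1 ?addr0; last first.
  by move=> s sn1; rewrite !ffunE /= eqxx (negbTE sn1) !mul0r.
by rewrite !ffunE /= !eqxx mul1r invg1 mul1g chi1 expr1n invr1 mulr1.
Qed.

Lemma mulH1 (i0 : 'I_n) a : val i0 = 0%N ->
  Hmul chi a (zpow_kG i0 delta1) = a.
Proof.
move=> i00; apply/ffunP => [[k t]]; rewrite ffunE /=.
rewrite (bigD1 k) //= [X in _ + X]big1 ?addr0; last first.
  move=> i ik; apply: big1 => l /eqP il; apply: big1 => s _.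
  rewrite ffunE /=; case: eqP => [/(congr1 val) li0|]; last by rewrite mulr0 mul0r.
  by move: il; rewrite li0 i00 addn0 => /val_inj il; rewrite il eqxx in ik.
rewrite (bigD1 i0) /=; last by rewrite i00 addn0.
rewrite [X in _ + X]big1 ?addr0; last first.
  by move=> l /andP[_ li0]; apply: big1 => s _; rewrite ffunE /= (negbTE li0) mulr0 mul0r.
rewrite (bigD1 t) //= [X in _ + X]big1 ?addr0; last first.
  move=> s st; rewrite !ffunE /= eqxx.
  case: eqP => [H|]; last by rewrite mulr0 mul0r.
  have E : s = t by move/eqP: H; rewrite -eq_mulVg1 => /eqP.
  by rewrite E eqxx in st.
by rewrite !ffunE /= eqxx mulVg eqxx i00 expr0 invr1 !mulr1.
Qed.

End S.

Lemma key (K : fieldType) (gT : finGroupType) (chi : gT -> K) (n : nat)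
  (i0 : 'I_n) (i j : 'I_n) (hi hj : {ffun gT -> K}) :
  val i0 = 0%N -> chi 1%g = 1 -> hi != 0 -> (i < j)%N ->
  ~ (forall x : Halg K gT n,
       in_ideal chi (zpow_kG i hi) x -> in_ideal chi (zpow_kG j hj) x).
Proof.
move=> i00 chi1 hnz ij H.
have self : in_ideal chi (zpow_kG i hi) (zpow_kG i hi).
  exists 1%N, (fun _ => zpow_kG i0 (delta1 K gT)), (fun _ => zpow_kG i0 (delta1 K gT)).
  by rewrite big_ord1 mulH1 // mul1H.
have lj : @lowvan K gT n j (zpow_kG j hj).
  move=> [k t] /= kj; rewrite ffunE /=; case: eqP => // kj'.
  by rewrite kj' ltnn in kj.
have := @lowvan_ideal K gT n chi j _ _ lj (H _ self).
have [t ht] : exists t, hi t != 0.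
  apply/existsP; move: hnz; apply: contraR; rewrite negb_exists => /forallP A.
  by apply/eqP/ffunP => t; rewrite ffunE; apply/eqP; have := A t; rewrite negbK.
move=> L; move: (L (i, t) ij); rewrite ffunE /= eqxx => E.
by rewrite E eqxx in ht.
Qed.

Theorem lemma3p4 (K : closedFieldType) (gT : finGroupType) (chi : gT -> K)
  (g : gT) (n : nat) :
  [pchar K] =i pred0 ->
  linear_char chi ->
  (g \in 'Z([set: gT]))%g ->
  (2 <= n)%N ->
  n.-primitive_root (chi g) ->
  forall h : 'I_n -> {ffun gT -> K},
    (forall i, h i != 0) ->
    forall i j : 'I_n, i != j ->
      ~ (forall x : Halg K gT n,
           in_ideal chi (zpow_kG i (h i)) x <-> in_ideal chi (zpow_kG j (h j)) x).
Proof.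
move=> _ [chi0 chiM] _ n2 _ h hnz i j ij H.
have n0 : (0 < n)%N by apply: leq_trans n2.
have chi1 : chi 1%g = 1.
  apply: (mulIf (chi0 1%g)); rewrite mul1r -chiM mulg1 //.
case: (ltngtP i j) => [lt|gt|eq].
- by apply: (@key K gT chi n (Ordinal n0) i j (h i) (h j) erefl chi1 (hnz i) lt) => x /H.
- by apply: (@key K gT chi n (Ordinal n0) j i (h j) (h i) erefl chi1 (hnz j) gt) => x Hx; apply/H.
- by move/val_inj: eq => eq; rewrite eq eqxx in ij.
Qed.
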